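(* Fix $\alpha\in(0,\pi/4]$ and let ALG be any deterministic online algorithm. Then $\rho(\mathrm{ALG};\alpha)\ge\rho^*$, where $$\rho^*=\frac{s^*(1+s^* )\sqrt{1-\cos(4\alpha)}}{\sqrt{2(1+(s^* )^4)-4(s^* )^2\cos(4\alpha)}},$$ $$s^*=-\tfrac12\cos(4\alpha)+\tfrac12\sqrt{\cos^2(4\alpha)-\frac{8\sqrt[3]{2}\sin^2(2\alpha)}{h}+\frac{h}{3\sqrt[3]{2}}}+\tfrac12\sqrt{2\cos^2(4\alpha)+\frac{8\sqrt[3]{2}\sin^2(2\alpha)}{h}+\frac{16-8\cos^3(4\alpha)}{4\sqrt{\cos^2(4\alpha)-\frac{8\sqrt[3]{2}\sin^2(2\alpha)}{h}+\frac{h}{3\sqrt[3]{2}}}}-\frac{h}{3\sqrt[3]{2}}},$$ $$h=\sqrt[3]{-108\cos^2(4\alpha)+\sqrt{(108-108\cos^2(4\alpha))^2-4(12\cos(4\alpha)-12)^3}+108}.$$ In particular, ALG cannot obtain a ratio better than $\rho^*$ on all prefixes of the request sequence $X_0=(0,0)$, $X_i=(2(-s)^{i-1},0)$ ($i\ge1$) with $s=s^*$.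
   Context: Online drone coverage on a line. A drone has a fixed half angle-of-view $\alpha\in(0,\pi/2)$. A drone at a point $T=(t_x,t_y)$ with $t_y\ge 0$ covers the segment $[t_x-t_y\tan\alpha,\ t_x+t_y\tan\alpha]$ of the $x$-axis. For a point $X=(x,0)$ its feasibility cone is $\mathrm{FC}(X)=\{(u,v): v\ge 0,\ |u-x|\le v\tan\alpha\}$, and the feasibility cone of a finite set of points is the intersection of their cones. An input is a finite sequence of points $X_0=(0,0),X_1,\dots,X_n$ ($n\ge1$) on the $x$-axis, revealed one at a time. A solution is a sequence of drone positions $P_0=(0,0),P_1,\dots,P_n$ with $P_i\in\mathrm{FC}(X_0,\dots,X_i)$; its cost is $\sum_{i=0}^{n-1}|P_iP_{i+1}|$. A deterministic online algorithm chooses $P_i$ knowing only $X_0,\dots,X_i$ (it does not know $n$). $\mathrm{OPT}(\mathbf X;\alpha)$ is the minimum cost of a solution when the whole input is known in advance. The competitive ratio $\rho(\mathrm{ALG};\alpha)$ is the supremum over inputs of $\mathrm{ALG}(\mathbf X;\alpha)/\mathrm{OPT}(\mathbf X;\alpha)$. *)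

(* Defs.v *)
From Stdlib Require Import Reals Lra List.
From Coquelicot Require Import Coquelicot.
Open Scope R_scope.

(* real cube root (sign-symmetric; the paper only uses it on positive args) *)
Definition cbrt (x : R) : R :=
  if Rlt_dec 0 x then Rpower x (1/3)
  else if Rlt_dec x 0 then - Rpower (- x) (1/3) else 0.

Definition dist2 (P Q : R * R) : R :=
  sqrt ((fst P - fst Q)^2 + (snd P - snd Q)^2).

Definition in_FC (alpha x : R) (T : R * R) : Prop :=
  0 <= snd T /\ Rabs (fst T - x) <= snd T * tan alpha.

(* An input is X_0 = (0,0) followed by X_1,...,X_n; we store the list
   xs = [x_1; ...; x_n] of x-coordinates (n = length xs).
   X xs j is the x-coordinate of X_j. *)
Definition Xc (xs : list R) (j : nat) : R :=
  match j with O => 0 | S k => nth k xs 0 end.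

Definition in_FC_upto (alpha : R) (xs : list R) (i : nat) (T : R * R) : Prop :=
  forall j, (j <= i)%nat -> in_FC alpha (Xc xs j) T.

Fixpoint path_cost (P : nat -> R * R) (n : nat) : R :=
  match n with
  | O => 0
  | S k => path_cost P k + dist2 (P k) (P (S k))
  end.

Definition feasible (alpha : R) (xs : list R) (P : nat -> R * R) : Prop :=
  P O = (0, 0) /\
  forall i, (1 <= i <= length xs)%nat -> in_FC_upto alpha xs i (P i).

Definition OPT (alpha : R) (xs : list R) : R :=
  real (Glb_Rbar (fun c => exists P, feasible alpha xs P /\
                                     c = path_cost P (length xs))).

(* A deterministic online algorithm: maps the revealed prefix
   [x_1; ...; x_i] (i >= 1; X_0 = (0,0) is implicit) to the position P_i.
   Since it is a function of the prefix only, it does not know n. *)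
Definition online_alg := list R -> R * R.

Definition valid_alg (alpha : R) (alg : online_alg) : Prop :=
  forall ys : list R, ys <> nil -> in_FC_upto alpha ys (length ys) (alg ys).

Definition alg_positions (alg : online_alg) (xs : list R) (i : nat) : R * R :=
  match i with O => (0, 0) | S _ => alg (firstn i xs) end.

Definition ALG_cost (alg : online_alg) (xs : list R) : R :=
  path_cost (alg_positions alg xs) (length xs).

(* competitive ratio: sup over inputs (n >= 1) of ALG/OPT; inputs with
   OPT = 0 (ratio undefined) are excluded *)
Definition comp_ratio (alpha : R) (alg : online_alg) : Rbar :=
  Lub_Rbar (fun r => exists xs : list R, (1 <= length xs)%nat /\
              0 < OPT alpha xs /\ r = ALG_cost alg xs / OPT alpha xs).

Definition h_const (alpha : R) : R :=
  let c := cos (4 * alpha) in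
  cbrt (-108 * c^2 + sqrt ((108 - 108 * c^2)^2 - 4 * (12 * c - 12)^3) + 108).

Definition s_star (alpha : R) : R :=
  let c := cos (4 * alpha) in
  let h := h_const alpha in
  let k := cbrt 2 in
  let A := sqrt (c^2 - 8 * k * (sin (2 * alpha))^2 / h + h / (3 * k)) in
  - (1/2) * c + (1/2) * A
  + (1/2) * sqrt (2 * c^2 + 8 * k * (sin (2 * alpha))^2 / h
                  + (16 - 8 * c^3) / (4 * A) - h / (3 * k)).

Definition rho_star (alpha : R) : R :=
  let s := s_star alpha in
  let c := cos (4 * alpha) in
  s * (1 + s) * sqrt (1 - c) / sqrt (2 * (1 + s^4) - 4 * s^2 * c).

Definition adv_prefix (s : R) (n : nat) : list R :=
  map (fun k => 2 * (- s)^k) (seq 0 n).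

(* Main.v *)
Require Import Defs.
From Stdlib Require Import Reals Lra List Psatz.
From Coquelicot Require Import Coquelicot.
Open Scope R_scope.

Lemma dist2_lin (u1 u2 : R) (P Q : R * R) :
  u1^2 + u2^2 <= 1 ->
  u1 * (fst Q - fst P) + u2 * (snd Q - snd P) <= dist2 P Q.
Proof.
  intros Hu. unfold dist2.
  set (dx := fst P - fst Q). set (dy := snd P - snd Q).
  replace (fst Q - fst P) with (- dx) by (unfold dx; ring).
  replace (snd Q - snd P) with (- dy) by (unfold dy; ring).
  set (l := u1 * - dx + u2 * - dy).
  destruct (Rle_dec l 0) as [H|H].
  - pose proof (sqrt_pos (dx^2 + dy^2)). lra.
  - rewrite <- (sqrt_pow2 l) by lra. apply sqrt_le_1_alt.
    unfold l. assert (0 <= (u1*dy - u2*dx)^2) by apply pow2_ge_0.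
    assert (0 <= dx^2 + dy^2) by nra.
    nra.
Qed.

Lemma dist2_nonneg P Q : 0 <= dist2 P Q.
Proof. apply sqrt_pos. Qed.

Lemma path_cost_nonneg P n : 0 <= path_cost P n.
Proof. induction n; simpl; [lra|]. pose proof (dist2_nonneg (P n) (P (S n))). lra. Qed.

Lemma path_cost_lin (u1 u2 : R) P n :
  u1^2 + u2^2 <= 1 ->
  u1 * (fst (P n) - fst (P O)) + u2 * (snd (P n) - snd (P O)) <= path_cost P n.
Proof.
  intros Hu. induction n; simpl.
  - lra.
  - pose proof (dist2_lin u1 u2 (P n) (P (S n)) Hu). lra.
Qed.

Lemma path_cost_ext P Q n : (forall i, (i <= n)%nat -> P i = Q i) -> path_cost P n = path_cost Q n.
Proof.
  induction n; intros H; simpl; auto.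
  rewrite IHn by (intros; apply H; lia). rewrite (H n) by lia. rewrite (H (S n)) by lia. reflexivity.
Qed.

Lemma path_cost_const (c : R * R) P n : (1 <= n)%nat -> (forall i, (1 <= i)%nat -> P i = c) ->
  path_cost P n = dist2 (P O) c.
Proof.
  intros Hn H. induction n as [|n IH]; [lia|]. simpl.
  destruct n as [|n].
  - simpl. rewrite (H 1%nat) by lia. ring.
  - rewrite IH by lia. rewrite (H (S n)) by lia. rewrite (H (S (S n))) by lia. unfold dist2.
    replace ((fst c - fst c)^2 + (snd c - snd c)^2) with 0 by ring. rewrite sqrt_0. ring.
Qed.

Lemma glb_facts (S : R -> Prop) (g c0 : R) :
  S c0 -> (forall c, S c -> g <= c) ->
  g <= real (Glb_Rbar S) /\ (forall c, S c -> real (Glb_Rbar S) <= c).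
Proof.
  intros H0 Hlb. destruct (Glb_Rbar_correct S) as [Hl Hg].
  assert (Hb : Rbar_le g (Glb_Rbar S)).
  { apply Hg. intros x Hx. simpl. apply Hlb; auto. }
  pose proof (Hl c0 H0) as Hc0.
  destruct (Glb_Rbar S) as [r| |]; simpl in *; try contradiction.
  split; [exact Hb | intros c Hc; exact (Hl c Hc)].
Qed.

Lemma Xc_firstn xs i j : (j <= i)%nat -> Xc (firstn i xs) j = Xc xs j.
Proof.
  intros H. destruct j as [|k]; simpl; auto.
  rewrite nth_firstn. destruct (Nat.ltb_spec k i); [reflexivity | lia].
Qed.

Lemma alg_feasible alpha alg xs : valid_alg alpha alg -> feasible alpha xs (alg_positions alg xs).
Proof.
  intros Hv. split; [reflexivity|].
  intros i Hi. destruct i as [|i]; [lia|]. simpl alg_positions.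
  assert (Hne : firstn (S i) xs <> nil).
  { destruct xs; simpl in *; [lia| discriminate]. }
  pose proof (Hv _ Hne) as H. rewrite firstn_length_le in H by lia.
  intros j Hj. rewrite <- (Xc_firstn xs (S i) j Hj). apply H; auto.
Qed.

Lemma OPT_le_feas alpha xs P : feasible alpha xs P -> OPT alpha xs <= path_cost P (length xs).
Proof.
  intros HP. unfold OPT.
  destruct (glb_facts (fun c => exists P, feasible alpha xs P /\ c = path_cost P (length xs)) 0
     (path_cost P (length xs))) as [_ H2].
  - exists P; auto.
  - intros c [Q [_ ->]]. apply path_cost_nonneg.
  - apply H2. exists P; auto.
Qed.

Lemma OPT_le_ALG alpha alg xs : valid_alg alpha alg -> OPT alpha xs <= ALG_cost alg xs.
Proof. intros Hv. apply OPT_le_feas, alg_feasible, Hv. Qed.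

Lemma OPT_pos alpha alg xs : 0 < tan alpha -> valid_alg alpha alg -> (1 <= length xs)%nat ->
  Xc xs (length xs) <> Xc xs (pred (length xs)) -> 0 < OPT alpha xs.
Proof.
  intros Ht Hv Hl Hne. set (N := length xs) in *.
  set (d := Rabs (Xc xs N - Xc xs (pred N))).
  assert (Hd : 0 < d) by (unfold d; apply Rabs_pos_lt; lra).
  unfold OPT.
  destruct (glb_facts (fun c => exists P, feasible alpha xs P /\ c = path_cost P (length xs)) (d / (2 * tan alpha))
     (path_cost (alg_positions alg xs) (length xs))) as [H1 _].
  - exists (alg_positions alg xs). split; auto. apply alg_feasible; auto.
  - intros c [P [[HP0 HP] ->]].
    pose proof (path_cost_lin 0 1 P (length xs) ltac:(lra)) as Hc.
    rewrite HP0 in Hc. simpl in Hc.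
    assert (HN : (1 <= N <= length xs)%nat) by (unfold N; lia).
    pose proof (HP N HN N (le_n _)) as [Hb1 Ha1].
    pose proof (HP N HN (pred N) ltac:(lia)) as [_ Ha2].
    assert (d <= 2 * (snd (P N) * tan alpha)).
    { unfold d. replace (Xc xs N - Xc xs (pred N)) with ((fst (P N) - Xc xs (pred N)) - (fst (P N) - Xc xs N)) by ring.
      eapply Rle_trans; [apply Rabs_triang|]. rewrite Rabs_Ropp. lra. }
    fold N in Hc |- *.
    apply Rle_trans with (snd (P N)); [|lra].
    unfold Rdiv. apply (Rmult_le_reg_r (2 * tan alpha)); [lra|].
    rewrite Rmult_assoc, Rinv_l by lra. lra.
  - eapply Rlt_le_trans; [|exact H1]. apply Rdiv_lt_0_compat; lra.
Qed.

Lemma adv_length s n : length (adv_prefix s n) = n.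
Proof. unfold adv_prefix. rewrite length_map, length_seq. reflexivity. Qed.

Lemma adv_Xc s N k : (k < N)%nat -> Xc (adv_prefix s N) (S k) = 2 * (-s)^k.
Proof.
  intros H. simpl. unfold adv_prefix.
  rewrite nth_indep with (d' := (fun k => 2 * (-s)^k) O).
  - rewrite (map_nth (fun k => 2 * (-s)^k)). rewrite seq_nth by auto. reflexivity.
  - rewrite length_map, length_seq; auto.
Qed.

Lemma adv_firstn s N i : (i <= N)%nat -> firstn i (adv_prefix s N) = adv_prefix s i.
Proof.
  intros H. unfold adv_prefix. rewrite firstn_map. f_equal.
  replace N with (i + (N - i))%nat by lia. rewrite seq_app.
  rewrite firstn_app. rewrite length_seq. replace (i - i)%nat with O by lia.
  rewrite firstn_O, app_nil_r. apply firstn_all2. rewrite length_seq. lia.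
Qed.

Lemma core (s t lam M K : R) (a b A sg : nat -> R) :
  1 < s -> 0 < t -> 0 < lam -> 0 <= M ->
  (forall n, sg n = 1 \/ sg n = -1) -> (forall n, sg (S n) = - sg n) ->
  (forall n, A n + (sg n * (lam/(s+1))) * (a (S n) - a n) + (lam*t/(s-1)) * (b (S n) - b n) <= A (S n)) ->
  (forall n, sg n * a n + 2 * s^(S n) <= t * b n) ->
  (forall n, Rabs (a n) <= t * b n) -> (forall n, 0 <= b n) ->
  (forall n, A n <= M * K * s^n) ->
  2 * lam * s <= (s-1) * M * K.
Proof.
  intros Hs Ht Hl HM Hsg HsgS Hstep Hcon Habs Hb HA.
  set (ux := lam/(s+1)). set (uy := lam*t/(s-1)).
  assert (Hux : (s+1)*ux = lam) by (unfold ux; field; lra).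
  assert (Huy : (s-1)*uy = lam*t) by (unfold uy; field; lra).
  assert (Hux0 : 0 < ux) by (unfold ux; apply Rdiv_lt_0_compat; lra).
  assert (Hxy : ux * t <= uy).
  { apply (Rmult_le_reg_l (s+1)); [lra|]. apply (Rmult_le_reg_l (s-1)); [lra|].
    replace ((s-1)*((s+1)*(ux*t))) with ((s-1)*lam*t) by (rewrite <- Hux; ring).
    replace ((s-1)*((s+1)*uy)) with ((s+1)*(lam*t)) by (rewrite <- Huy; ring). nra. }
  set (delta := 2*lam*s - (s-1)*M*K).
  set (Psi := fun n => (s * A n - s*uy*b n + s*sg n*ux*a n) / s^n).
  assert (Hp : forall n, 0 < s^n) by (intros; apply pow_lt; lra).
  assert (Hstep2 : forall n, Psi n + delta <= Psi (S n)).
  { intros n. unfold Psi; cbv beta. pose proof (Hp n) as Hpn. set (p := s^n) in *.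
    replace (s^(S n)) with (s*p) by (unfold p; simpl; ring).
    rewrite HsgS.
    assert (key : (s * A n - s*uy*b n + s*sg n*ux*a n) + delta * p <=
                  (A (S n) - uy * b (S n) - sg n * ux * a (S n))).
    { pose proof (Hstep n) as H1. fold ux uy in H1. pose proof (Hcon n) as H2. pose proof (HA n) as H3.
      fold p in H2, H3. replace (s^(S n)) with (s*p) in H2 by (unfold p; simpl; ring).
      unfold delta.
      assert (E : -(s-1)*A n + (s-1)*uy*b n - (s+1)*sg n*ux*a n = -(s-1)*A n + lam*(t*b n - sg n * a n)).
      { assert (E1: lam*t*b n = (s-1)*uy*b n) by (rewrite <- Huy; ring).
        assert (E2 : lam*(sg n*a n) = (s+1)*ux*(sg n * a n)) by (rewrite <- Hux; ring).
        nra. }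
      assert (lam*(t*b n - sg n * a n) >= lam * (2*(s*p))) by (apply Rmult_ge_compat_l; lra).
      assert ((s-1)*A n <= (s-1)*(M*K*p)) by (apply Rmult_le_compat_l; lra).
      nra. }
    replace ((s * A n - s * uy * b n + s * sg n * ux * a n) / p + delta)
      with ((s * A n - s * uy * b n + s * sg n * ux * a n + delta * p) / p) by (field; lra).
    replace ((s * A (S n) - s * uy * b (S n) + s * - sg n * ux * a (S n)) / (s * p))
      with ((A (S n) - uy * b (S n) - sg n * ux * a (S n)) / p) by (field; lra).
    unfold Rdiv. apply Rmult_le_compat_r; [left; apply Rinv_0_lt_compat; lra| exact key]. }
  assert (Hup : forall n, Psi n <= s*M*K).
  { intros n. unfold Psi. pose proof (Hp n) as Hpn.
    apply (Rmult_le_reg_r (s^n)); [lra|]. unfold Rdiv. rewrite Rmult_assoc, Rinv_l by lra. rewrite Rmult_1_r.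
    assert (sg n * a n <= Rabs (a n)).
    { destruct (Hsg n) as [-> | ->]. rewrite Rmult_1_l; apply Rle_abs.
      replace (-1 * a n) with (- a n) by ring. rewrite <- Rabs_Ropp. apply Rle_abs. }
    pose proof (Habs n). pose proof (Hb n). pose proof (HA n).
    assert (ux * (sg n * a n) <= ux * (t * b n)) by (apply Rmult_le_compat_l; lra).
    assert (ux * t * b n <= uy * b n) by (apply Rmult_le_compat_r; lra).
    assert (s * A n <= s * (M*K*s^n)) by (apply Rmult_le_compat_l; lra).
    nra. }
  assert (Hind : forall n, Psi O + INR n * delta <= Psi n).
  { induction n. simpl. lra. rewrite S_INR. pose proof (Hstep2 n). lra. }
  destruct (Rle_dec delta 0) as [Hd|Hd]; [unfold delta in Hd; lra|].
  exfalso. destruct (INR_archimed delta (s*M*K - Psi O)) as [n Hn]; [lra|].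
  pose proof (Hind n). pose proof (Hup n). lra.
Qed.

Lemma trig_facts alpha : 0 < alpha <= PI/4 ->
  0 < sin alpha /\ 0 < cos alpha /\ tan alpha = sin alpha / cos alpha /\
  cos (4*alpha) = 1 - 8 * (sin alpha)^2 * (cos alpha)^2 /\ (sin alpha)^2 + (cos alpha)^2 = 1.
Proof.
  intros [H1 H2]. pose proof PI_RGT_0.
  assert (0 < sin alpha) by (apply sin_gt_0; lra).
  assert (0 < cos alpha) by (apply cos_gt_0; lra).
  repeat split; auto.
  - replace (4*alpha) with (2*(2*alpha)) by ring. rewrite cos_2a_sin, sin_2a. ring.
  - pose proof (sin2_cos2 alpha). unfold Rsqr in *. lra.
Qed.

Lemma poly_id s S C : S + C = 1 ->
  (1 - s^2)^2 + 16 * s^2 * S * C = ((s-1)^2*C + S*(s+1)^2) * ((s-1)^2*S + (s+1)^2*C).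
Proof. intros H. replace S with (1 - C) by lra. ring. Qed.

Lemma rho_bound alpha s : 0 < alpha <= PI/4 -> 1 < s ->
  let t := tan alpha in
  let c := cos (4*alpha) in
  let K := sqrt ((1-s)^2 + ((1+s)/t)^2) in
  let lam := / sqrt (1/(s+1)^2 + t^2/(s-1)^2) in
  s * (1 + s) * sqrt (1 - c) / sqrt (2 * (1 + s^4) - 4 * s^2 * c) <= 2 * lam * s / ((s-1) * K).
Proof.
  intros Ha Hs t c K lam.
  destruct (trig_facts alpha Ha) as (Hsn & Hco & Ht & Hc & Hsc).
  set (sn := sin alpha) in *. set (co := cos alpha) in *.
  assert (Ht0 : 0 < t) by (unfold t; rewrite Ht; apply Rdiv_lt_0_compat; auto).
  set (K0 := (1-s)^2 + ((1+s)/t)^2).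
  set (L0 := 1/(s+1)^2 + t^2/(s-1)^2).
  assert (HK0 : 0 < K0) by (unfold K0; assert (0 < ((1+s)/t)^2) by (apply pow_lt; apply Rdiv_lt_0_compat; lra); nra).
  assert (HL0 : 0 < L0).
  { unfold L0. assert (0 < 1/(s+1)^2) by (apply Rdiv_lt_0_compat; [lra| apply pow_lt; lra]).
    assert (0 <= t^2/(s-1)^2) by (apply Rmult_le_pos; [apply pow2_ge_0| left; apply Rinv_0_lt_compat, pow_lt; lra]). lra. }
  assert (HK : 0 < K) by (apply sqrt_lt_R0; auto).
  assert (Hlam : 0 < lam) by (apply Rinv_0_lt_compat, sqrt_lt_R0; auto).
  assert (HKK : K * K = K0) by (apply sqrt_sqrt; lra).
  assert (Hll : lam * lam * L0 = 1).
  { unfold lam. rewrite <- Rinv_mult. fold L0. rewrite sqrt_sqrt by lra. field. lra. }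
  set (D := 2 * (1 + s^4) - 4 * s^2 * c).
  assert (HD : 0 < D).
  { assert (HDe : D = 2*(s^2-1)^2 + 32*s^2*(sn^2*co^2)) by (unfold D, c; rewrite Hc; ring).
    assert (0 <= sn^2 * co^2) by (apply Rmult_le_pos; apply pow2_ge_0).
    assert (0 < (s^2-1)^2) by (apply pow_lt; nra).
    assert (0 <= s^2*(sn^2*co^2)) by (apply Rmult_le_pos; [apply pow2_ge_0|auto]). lra. }
  assert (Hc1 : 0 <= 1 - c) by (unfold c; pose proof (COS_bound (4*alpha)); lra).
  apply Rsqr_incr_0_var.
  2:{ apply Rlt_le. apply Rdiv_lt_0_compat; nra. }
  unfold Rsqr.
  assert (E1 : sqrt (1 - c) * sqrt (1 - c) = 1 - c) by (apply sqrt_sqrt; lra).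
  assert (E2 : sqrt D * sqrt D = D) by (apply sqrt_sqrt; lra).
  assert (HsD : 0 < sqrt D) by (apply sqrt_lt_R0; lra).
  fold D.
  assert (Eq1 : s * (1 + s) * sqrt (1 - c) / sqrt D * (s * (1 + s) * sqrt (1 - c) / sqrt D)
    = s^2 * (1+s)^2 * (1 - c) / D).
  { replace (s * (1 + s) * sqrt (1 - c) / sqrt D * (s * (1 + s) * sqrt (1 - c) / sqrt D))
      with (s*(1+s)*(s*(1+s))*(sqrt (1-c)*sqrt (1-c))/(sqrt D*sqrt D)) by (field; lra).
    rewrite E1, E2. field; lra. }
  rewrite Eq1.
  replace (2 * lam * s / ((s - 1) * K) * (2 * lam * s / ((s - 1) * K)))
    with (4 * s^2 / (L0 * (s-1)^2 * K0)).
  2:{ rewrite <- HKK. replace (4 * s^2) with (4 * s^2 * (lam*lam*L0)) by (rewrite Hll; ring).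
      field. repeat split; try lra. }
  right.
  set (P1 := (s-1)^2*co^2 + sn^2*(s+1)^2). set (P2 := (s-1)^2*sn^2 + (s+1)^2*co^2).
  assert (HP1 : 0 < P1) by (unfold P1; assert (0 < sn^2*(s+1)^2) by (apply Rmult_lt_0_compat; apply pow_lt; lra);
     assert (0 <= (s-1)^2*co^2) by (apply Rmult_le_pos; apply pow2_ge_0); lra).
  assert (HP2 : 0 < P2) by (unfold P2; assert (0 < (s+1)^2*co^2) by (apply Rmult_lt_0_compat; apply pow_lt; lra);
     assert (0 <= (s-1)^2*sn^2) by (apply Rmult_le_pos; apply pow2_ge_0); lra).
  pose proof (poly_id s (sn^2) (co^2) Hsc) as Hp. fold P1 P2 in Hp.
  assert (HDQ : D = 2 * (P1 * P2)) by (rewrite <- Hp; unfold D, c; rewrite Hc; ring).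
  assert (HLK : L0 * (s-1)^2 * K0 = P1 * P2 / ((s+1)^2 * co^2 * sn^2)).
  { unfold L0, K0, P1, P2, t. rewrite Ht. field. repeat split; lra. }
  rewrite HLK, HDQ. unfold c. rewrite Hc. field. repeat split; try lra. 
Qed.

Lemma sg_cases n : (-1)^n = 1 \/ (-1)^n = -1.
Proof. induction n; simpl; [left; ring|]. destruct IHn as [-> | ->]; [right|left]; ring. Qed.

Lemma negpow s n : (-s)^n = (-1)^n * s^n.
Proof. replace (-s) with ((-1)*s) by ring. apply Rpow_mult_distr. Qed.

Lemma rho_le1 alpha s : 0 < alpha <= PI/4 -> s <= 1 ->
  s * (1 + s) * sqrt (1 - cos (4*alpha)) / sqrt (2 * (1 + s^4) - 4 * s^2 * cos (4*alpha)) <= 1.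
Proof.
  intros Ha Hs. set (c := cos (4*alpha)).
  pose proof (COS_bound (4*alpha)) as Hcb. fold c in Hcb.
  set (D := 2 * (1 + s^4) - 4 * s^2 * c).
  set (y := 1 - c).
  assert (HDe : D = 2*(1-s^2)^2 + 4*s^2*y) by (unfold D, y; ring).
  assert (Hy : 0 <= y <= 2) by (unfold y; lra).
  assert (HD : 0 <= D) by (rewrite HDe; assert (0 <= (1-s^2)^2) by apply pow2_ge_0; nra).
  destruct (Req_dec (sqrt D) 0) as [H0|H0].
  { rewrite H0. unfold Rdiv. rewrite Rinv_0. lra. }
  assert (HsD : 0 < sqrt D) by (pose proof (sqrt_pos D); lra).
  destruct (Rle_dec (s*(1+s)) 0) as [Hn|Hn].
  { assert (s * (1 + s) * sqrt y <= 0).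
    { pose proof (sqrt_pos y). nra. }
    fold y. apply Rle_trans with 0; [|lra].
    unfold Rdiv. apply Rmult_le_0_r; [lra| left; apply Rinv_0_lt_compat; lra]. }
  fold y.
  assert (Hle : s * (1 + s) * sqrt y <= sqrt D).
  { apply Rsqr_incr_0_var; [|lra]. unfold Rsqr.
    replace (s * (1 + s) * sqrt y * (s * (1 + s) * sqrt y)) with ((s*(1+s))^2 * (sqrt y * sqrt y)) by ring.
    rewrite !sqrt_sqrt by lra. rewrite HDe.
    destruct (Rle_dec (-3) s).
    - assert ((1+s)^2 <= 4) by nra.
      assert (0 <= s^2) by apply pow2_ge_0.
      assert (0 <= (1-s^2)^2) by apply pow2_ge_0.
      assert (s^2*(1+s)^2*y <= s^2*4*y).
      { apply Rmult_le_compat_r; [lra|]. apply Rmult_le_compat_l; lra. }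
      replace ((s*(1+s))^2 * y) with (s^2*(1+s)^2*y) by ring. lra.
    - assert (s^2 <= (1-s)^2) by nra.
      assert (0 <= (1+s)^2) by apply pow2_ge_0.
      assert ((s*(1+s))^2 * y <= (s*(1+s))^2 * 2) by (apply Rmult_le_compat_l; [apply pow2_ge_0|lra]).
      assert (s^2*(1+s)^2 <= (1-s)^2*(1+s)^2) by (apply Rmult_le_compat_r; lra).
      assert (0 <= s^2 * y) by (apply Rmult_le_pos; [apply pow2_ge_0|lra]).
      replace ((1-s^2)^2) with ((1-s)^2*(1+s)^2) by ring.
      replace ((s*(1+s))^2) with (s^2*(1+s)^2) in * by ring. lra. }
  unfold Rdiv. apply (Rmult_le_reg_r (sqrt D)); [lra|].
  rewrite Rmult_assoc, Rinv_l by lra. lra.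
Qed.

Definition Pinf (alg : online_alg) (s : R) (n : nat) : R * R :=
  match n with O => (0,0) | S _ => alg (adv_prefix s n) end.

Lemma ALG_adv alg s N : ALG_cost alg (adv_prefix s N) = path_cost (Pinf alg s) N.
Proof.
  unfold ALG_cost. rewrite adv_length. apply path_cost_ext.
  intros i Hi. destruct i as [|k]; simpl; auto.
  rewrite <- (adv_firstn s N (S k)) by auto. reflexivity.
Qed.

Lemma Pinf_FC alpha alg s n j : valid_alg alpha alg -> (1 <= n)%nat -> (j <= n)%nat ->
  in_FC alpha (Xc (adv_prefix s n) j) (Pinf alg s n).
Proof.
  intros Hv Hn Hj. destruct n as [|n]; [lia|]. simpl Pinf.
  assert (Hne : adv_prefix s (S n) <> nil).
  { intro H. pose proof (adv_length s (S n)) as L. rewrite H in L. simpl in L. lia. }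
  pose proof (Hv _ Hne) as H. rewrite adv_length in H. apply H; auto.
Qed.

Lemma adv_Xc0 s N : Xc (adv_prefix s N) O = 0.
Proof. reflexivity. Qed.

Lemma OPT_apex alpha s n : 0 < tan alpha -> 1 < s ->
  OPT alpha (adv_prefix s (n+2)) <= s^n * sqrt ((1-s)^2 + ((1+s)/tan alpha)^2).
Proof.
  intros Ht Hs. set (t := tan alpha) in *.
  set (Ap := ((-1)^n * s^n * (1-s), s^n*(1+s)/t)).
  set (Q := fun i : nat => match i with O => (0,0) | S _ => Ap end).
  assert (Hpn : 0 < s^n) by (apply pow_lt; lra).
  assert (Hfeas : feasible alpha (adv_prefix s (n+2)) Q).
  { split; [reflexivity|]. intros i Hi j Hj. rewrite adv_length in Hi.
    destruct i as [|i]; [lia|]. simpl Q. unfold in_FC. simpl fst; simpl snd. fold t.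
    replace (s ^ n * (1 + s) / t * t) with (s^n*(1+s)) by (field; lra).
    split; [apply Rlt_le, Rdiv_lt_0_compat; nra|].
    destruct j as [|k].
    - rewrite adv_Xc0. rewrite Rminus_0_r, !Rabs_mult, pow_1_abs, Rabs_pos_eq by lra.
      rewrite Rabs_left1 by lra. nra.
    - rewrite adv_Xc by lia. rewrite negpow.
      destruct (Nat.eq_dec k (S n)) as [->|Hk].
      + replace ((-1)^n * s^n * (1-s) - 2 * ((-1)^(S n) * s^(S n))) with ((-1)^n * (s^n*(1+s))) by (simpl; ring).
        rewrite Rabs_mult, pow_1_abs, Rabs_pos_eq by nra. lra.
      + assert (Hkn : (k <= n)%nat) by lia.
        pose proof (Rle_pow s k n ltac:(lra) Hkn) as Hsk.
        eapply Rle_trans; [apply Rabs_triang|]. rewrite Rabs_Ropp.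
        rewrite !Rabs_mult, !pow_1_abs. rewrite (Rabs_pos_eq (s^n)) by lra.
        rewrite (Rabs_left1 (1-s)) by lra. rewrite (Rabs_pos_eq 2) by lra.
        rewrite (Rabs_pos_eq (s^k)) by (apply pow_le; lra). nra. }
  eapply Rle_trans; [apply (OPT_le_feas _ _ _ Hfeas)|].
  rewrite adv_length. rewrite (path_cost_const Ap Q (n+2)); [| lia | intros i Hi; destruct i; [lia|reflexivity]].
  simpl Q. unfold dist2, Ap; simpl fst; simpl snd.
  right.
  assert (Hsg : ((-1)^n)^2 = 1) by (destruct (sg_cases n) as [-> | ->]; ring).
  replace ((0 - (-1) ^ n * s ^ n * (1 - s)) ^ 2 + (0 - s ^ n * (1 + s) / t) ^ 2)
    with ((s^n)^2 * ((1 - s) ^ 2 + ((1 + s) / t) ^ 2)).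
  2:{ replace ((0 - (-1) ^ n * s ^ n * (1 - s)) ^ 2) with (((-1)^n)^2 * (s^n)^2 * (1-s)^2) by ring.
      rewrite Hsg. field. lra. }
  rewrite sqrt_mult by (try apply pow2_ge_0; assert (0 <= ((1+s)/t)^2) by apply pow2_ge_0; nra).
  rewrite sqrt_pow2 by lra. reflexivity.
Qed.

Lemma path_cost_S P k : path_cost P (S k) = path_cost P k + dist2 (P k) (P (S k)).
Proof. reflexivity. Qed.

Lemma main_bound alpha alg s : 0 < alpha <= PI/4 -> valid_alg alpha alg ->
  Rbar_le (Finite (s * (1 + s) * sqrt (1 - cos (4*alpha)) / sqrt (2 * (1 + s^4) - 4 * s^2 * cos (4*alpha))))
   (Lub_Rbar (fun r => exists n : nat, (1 <= n)%nat /\ 0 < OPT alpha (adv_prefix s n) /\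
       r = ALG_cost alg (adv_prefix s n) / OPT alpha (adv_prefix s n))).
Proof.
  intros Ha Hv.
  set (E := fun r => exists n : nat, (1 <= n)%nat /\ 0 < OPT alpha (adv_prefix s n) /\
       r = ALG_cost alg (adv_prefix s n) / OPT alpha (adv_prefix s n)).
  destruct (trig_facts alpha Ha) as (Hsn & Hco & Ht & _ & _).
  assert (Ht0 : 0 < tan alpha) by (rewrite Ht; apply Rdiv_lt_0_compat; auto).
  set (t := tan alpha) in *.
  assert (HO1 : 0 < OPT alpha (adv_prefix s 1)).
  { apply (OPT_pos alpha alg); [exact Ht0 | exact Hv | rewrite adv_length; lia | ]. rewrite adv_length. simpl pred.
    rewrite adv_Xc by lia. rewrite adv_Xc0. simpl. lra. }
  set (r1 := ALG_cost alg (adv_prefix s 1) / OPT alpha (adv_prefix s 1)).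
  assert (Hr1E : E r1) by (exists 1%nat; repeat split; auto).
  assert (Hr1 : 1 <= r1).
  { unfold r1. pose proof (OPT_le_ALG alpha alg (adv_prefix s 1) Hv).
    apply (Rmult_le_reg_r (OPT alpha (adv_prefix s 1))); auto.
    unfold Rdiv. rewrite Rmult_assoc, Rinv_l by lra. lra. }
  destruct (Lub_Rbar_correct E) as [Hub _].
  remember (Lub_Rbar E) as L eqn:HL. clear HL.
  destruct L as [M| |].
  2:{ simpl. trivial. }
  2:{ exfalso. pose proof (Hub r1 Hr1E). simpl in H. exact H. }
  cbn [Rbar_le].
  assert (HubM : forall r, E r -> r <= M) by (intros r Hr; exact (Hub r Hr)).
  pose proof (HubM r1 Hr1E) as HM1.
  destruct (Rle_dec s 1) as [Hs|Hs].
  { pose proof (rho_le1 alpha s Ha Hs). lra. }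
  assert (Hs1 : 1 < s) by lra.
  set (K := sqrt ((1-s)^2 + ((1+s)/t)^2)).
  set (L0 := 1/(s+1)^2 + t^2/(s-1)^2).
  set (lam := / sqrt L0).
  assert (HL0 : 0 < L0).
  { unfold L0. assert (0 < 1/(s+1)^2) by (apply Rdiv_lt_0_compat; [lra| apply pow_lt; lra]).
    assert (0 <= t^2/(s-1)^2) by (apply Rmult_le_pos; [apply pow2_ge_0| left; apply Rinv_0_lt_compat, pow_lt; lra]). lra. }
  assert (HK : 0 < K).
  { apply sqrt_lt_R0. assert (0 < ((1+s)/t)^2) by (apply pow_lt; apply Rdiv_lt_0_compat; lra).
    assert (0 <= (1-s)^2) by apply pow2_ge_0. lra. }
  assert (Hlam : 0 < lam) by (apply Rinv_0_lt_compat, sqrt_lt_R0; auto).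
  assert (Hll : lam * lam * L0 = 1).
  { unfold lam. rewrite <- Rinv_mult. rewrite sqrt_sqrt by lra. field. lra. }
  set (a := fun n => fst (Pinf alg s (n+2))).
  set (b := fun n => snd (Pinf alg s (n+2))).
  set (A := fun n => path_cost (Pinf alg s) (n+2)).
  set (sg := fun n : nat => (-1)^n).
  assert (HX2 : forall n, Xc (adv_prefix s (n+2)) (n+2) = - 2 * sg n * s^(S n)).
  { intros n. replace (n+2)%nat with (S (S n)) at 2 by lia. rewrite adv_Xc by lia.
    rewrite negpow. unfold sg. simpl. ring. }
  assert (HX1 : forall n, Xc (adv_prefix s (n+2)) (n+1) = 2 * sg n * s^n).
  { intros n. replace (n+1)%nat with (S n) by lia. rewrite adv_Xc by lia.
    rewrite negpow. unfold sg. ring. }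
  assert (HFC2 : forall n, in_FC alpha (- 2 * sg n * s^(S n)) (Pinf alg s (n+2))).
  { intros n. rewrite <- HX2. apply Pinf_FC; auto; lia. }
  assert (HFC1 : forall n, in_FC alpha (2 * sg n * s^n) (Pinf alg s (n+2))).
  { intros n. rewrite <- HX1. apply Pinf_FC; auto; lia. }
  assert (Hsgc : forall n, sg n = 1 \/ sg n = -1) by (intros; apply sg_cases).
  assert (Hpow : forall n, 0 < s^n) by (intros; apply pow_lt; lra).
  assert (Hcore : 2 * lam * s <= (s-1) * M * K).
  { apply (core s t lam M K a b A sg); auto.
    - lra.
    - intros n. unfold sg. simpl. ring.
    - intros n. unfold A, a, b. replace (S n + 2)%nat with (S (n+2)) by lia.
      rewrite path_cost_S.
      pose proof (dist2_lin (sg n * (lam/(s+1))) (lam*t/(s-1)) (Pinf alg s (n+2)) (Pinf alg s (S (n+2)))) as Hd.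
      assert (Hu : (sg n * (lam / (s + 1))) ^ 2 + (lam * t / (s - 1)) ^ 2 <= 1).
      { right. replace ((sg n * (lam / (s + 1))) ^ 2) with (sg n ^2 * (lam / (s + 1)) ^ 2) by ring.
        replace (sg n ^2) with 1 by (destruct (Hsgc n) as [-> | ->]; ring).
        transitivity (lam*lam*L0); [unfold L0; field; lra | exact Hll]. }
      specialize (Hd Hu). lra.
    - intros n. unfold a, b. destruct (HFC2 n) as [Hb0 Hab]. fold t in Hab.
      apply Rabs_le_between in Hab.
      destruct (Hsgc n) as [Hg|Hg]; rewrite Hg in *; lra.
    - intros n. unfold a, b. destruct (HFC2 n) as [Hb0 Hab]. destruct (HFC1 n) as [_ Hab1]. fold t in Hab, Hab1.
      apply Rabs_le_between in Hab. apply Rabs_le_between in Hab1.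
      pose proof (Hpow n). pose proof (Hpow (S n)).
      apply Rabs_le_between.
      destruct (Hsgc n) as [Hg|Hg]; rewrite Hg in *; lra.
    - intros n. unfold b. destruct (HFC2 n) as [Hb0 _]. exact Hb0.
    - intros n. unfold A.
      assert (HO : 0 < OPT alpha (adv_prefix s (n+2))).
      { apply (OPT_pos alpha alg); [exact Ht0 | exact Hv | rewrite adv_length; lia | ]. rewrite adv_length.
        replace (pred (n+2)) with (n+1)%nat by lia. rewrite HX2, HX1.
        pose proof (Hpow n). pose proof (Hpow (S n)).
        destruct (Hsgc n) as [Hg|Hg]; rewrite Hg; lra. }
      assert (HEr : E (ALG_cost alg (adv_prefix s (n+2)) / OPT alpha (adv_prefix s (n+2)))).
      { exists (n+2)%nat. repeat split; auto. lia. }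
      pose proof (HubM _ HEr) as Hr. rewrite ALG_adv in Hr.
      pose proof (OPT_apex alpha s n Ht0 Hs1) as Hap. fold t K in Hap.
      assert (Hc : path_cost (Pinf alg s) (n+2) <= M * OPT alpha (adv_prefix s (n+2))).
      { apply (Rmult_le_reg_r (/ OPT alpha (adv_prefix s (n+2)))); [apply Rinv_0_lt_compat; auto|].
        rewrite Rmult_assoc, Rinv_r, Rmult_1_r by lra. exact Hr. }
      assert (M * OPT alpha (adv_prefix s (n+2)) <= M * (s^n * K)) by (apply Rmult_le_compat_l; lra).
      lra. }
  pose proof (rho_bound alpha s Ha Hs1) as Hrb. cbv zeta in Hrb. fold t K L0 lam in Hrb.
  eapply Rle_trans; [exact Hrb|].
  unfold Rdiv. apply (Rmult_le_reg_r ((s-1)*K)); [nra|].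
  rewrite Rmult_assoc, Rinv_l by nra. nra.
Qed.

Theorem theorem4 (alpha : R) (alg : online_alg) :
  0 < alpha <= PI / 4 ->
  valid_alg alpha alg ->
  Rbar_le (Finite (rho_star alpha)) (comp_ratio alpha alg) /\
  Rbar_le (Finite (rho_star alpha))
    (Lub_Rbar (fun r => exists n : nat, (1 <= n)%nat /\
       0 < OPT alpha (adv_prefix (s_star alpha) n) /\
       r = ALG_cost alg (adv_prefix (s_star alpha) n)
           / OPT alpha (adv_prefix (s_star alpha) n))).
Proof.
  intros Ha Hv.
  assert (H2 : Rbar_le (Finite (rho_star alpha))
    (Lub_Rbar (fun r => exists n : nat, (1 <= n)%nat /\
       0 < OPT alpha (adv_prefix (s_star alpha) n) /\
       r = ALG_cost alg (adv_prefix (s_star alpha) n)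
           / OPT alpha (adv_prefix (s_star alpha) n)))).
  { unfold rho_star. cbv zeta. apply main_bound; auto. }
  split; [|exact H2].
  eapply Rbar_le_trans; [exact H2|].
  destruct (Lub_Rbar_correct (fun r => exists n : nat, (1 <= n)%nat /\
       0 < OPT alpha (adv_prefix (s_star alpha) n) /\
       r = ALG_cost alg (adv_prefix (s_star alpha) n)
           / OPT alpha (adv_prefix (s_star alpha) n))) as [_ Hl].
  apply Hl. intros r [n [Hn [HO ->]]].
  unfold comp_ratio. destruct (Lub_Rbar_correct (fun r => exists xs : list R, (1 <= length xs)%nat /\
              0 < OPT alpha xs /\ r = ALG_cost alg xs / OPT alpha xs)) as [Hu _].
  apply Hu. exists (adv_prefix (s_star alpha) n). rewrite adv_length. auto.
Qed.
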